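(* Let $R$ be a commutative ring and $x\in R$ a regular element which is not a unit. Then the weak global dimension of $R\bowtie xR$ is infinite: $\mathrm{wdim}(R\bowtie xR)=\infty$.
   Context: All rings are commutative with identity. $R\bowtie xR:=\{(r,r+xs)\mid r,s\in R\}$, a subring of $R\times R$ with componentwise operations. A regular element is a non-zerodivisor. $\mathrm{wdim}$ denotes the (classical) weak global dimension, i.e. the supremum of flat dimensions of all modules. *)

(* Defs.v *)
From HB Require Import structures.
From mathcomp Require Import all_boot all_order all_algebra.
From Stdlib Require Import ClassicalEpsilon.
Set Implicit Arguments. Unset Strict Implicit. Unset Printing Implicit Defensive.
Import Order.TTheory GRing.Theory.
Local Open Scope ring_scope.

Definition asbool (P : Prop) : bool :=
  if excluded_middle_informative P then true else false.

Lemma asboolP (P : Prop) : reflect P (asbool P).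
Proof. by rewrite /asbool; case: excluded_middle_informative => h; constructor. Qed.

Section Amalgamation.
Variables (R : comPzRingType) (x : R).

Definition amalg_pred : pred (R * R) :=
  fun p => asbool (exists r s : R, p = (r, r + x * s)).

Lemma amalg_subring_closed : subring_closed amalg_pred.
Proof.
split.
- apply/asboolP; exists 1, 0; by rewrite mulr0 addr0.
- move=> p q /asboolP[r [s ->]] /asboolP[r' [s' ->]]; apply/asboolP.
  exists (r - r'), (s - s'); congr (_, _); rewrite mulrBr.
  by rewrite /= opprD addrACA.
- move=> p q /asboolP[r [s ->]] /asboolP[r' [s' ->]]; apply/asboolP.
  exists (r * r'), (r * s' + s * r' + x * s * s'); congr (_, _).
  rewrite /= mulrDl !mulrDr -!addrA; congr (_ + _).
  rewrite !mulrA [r * x]mulrC; congr (_ + _); congr (_ + _).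
  by congr (_ * s'); rewrite mulrAC.
Qed.


HB.instance Definition _ := GRing.isSubringClosed.Build (R * R)%type amalg_pred
  amalg_subring_closed.

Record amalg := Amalg { amalg_val : R * R; amalg_valP : amalg_pred amalg_val }.

HB.instance Definition _ := [isSub for amalg_val].
HB.instance Definition _ := [Choice of amalg by <:].
HB.instance Definition _ := GRing.SubChoice_isSubComPzRing.Build (R * R)%type amalg_pred amalg amalg_subring_closed.

End Amalgamation.

Notation "R ⋈ x" := (amalg (R := R) x) (at level 40).

Section Homological.
Variable A : comPzRingType.

Definition bilinear_map (M N T : lmodType A) (b : M -> N -> T) : Prop :=
  (forall n : N, linear (b ^~ n)) /\ (forall m : M, linear (b m)).

Definition is_tensor (M N T : lmodType A) (b : M -> N -> T) : Prop :=
  bilinear_map b /\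
  forall (P : lmodType A) (g : M -> N -> P), bilinear_map g ->
    exists h : {linear T -> P},
      (forall m n, h (b m n) = g m n) /\
      (forall h' : {linear T -> P}, (forall m n, h' (b m n) = g m n) ->
          forall t, h' t = h t).

Definition flat (M : lmodType A) : Prop :=
  forall (N1 N2 : lmodType A) (f : {linear N1 -> N2}), injective f ->
  forall (T1 T2 : lmodType A) (b1 : M -> N1 -> T1) (b2 : M -> N2 -> T2),
    is_tensor b1 -> is_tensor b2 ->
  forall h : {linear T1 -> T2}, (forall m n, h (b1 m n) = b2 m (f n)) ->
    injective h.

(* fd M <= n : M has a flat resolution of length n,
   0 -> F_n -> ... -> F_1 -> F_0 -> M -> 0  exact with F_i flat
   (written as an exact complex with F_i = 0 for i > n). *)
Definition flat_dim_le (M : lmodType A) (n : nat) : Prop :=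
  exists (F : nat -> lmodType A) (d : forall i, {linear F i.+1 -> F i})
         (eps : {linear F 0%N -> M}),
    (forall i, flat (F i)) /\
    (forall i, (n < i)%N -> forall v : F i, v = 0) /\
    (forall m : M, exists y, eps y = m) /\
    (forall y : F 0%N, eps y = 0 <-> exists z, d 0%N z = y) /\
    (forall i (y : F i.+1), d i y = 0 <-> exists z, d i.+1 z = y).

Definition wdim_infinite : Prop :=
  forall n : nat, exists M : lmodType A, ~ flat_dim_le M n.

End Homological.

(* Main.v *)
Require Import Defs.
From HB Require Import structures.
From mathcomp Require Import all_boot all_order all_algebra.
From Stdlib Require Import ClassicalEpsilon FunctionalExtensionality PropExtensionality.
Local Open Scope ring_scope.

Module Aux.
Set Implicit Arguments. Unset Strict Implicit. Unset Printing Implicit Defensive.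
Import GRing.Theory.
Local Open Scope ring_scope.

Section Quot.
Variables (A : comPzRingType) (N : lmodType A) (c : A).

Definition qrel (u v : N) := exists w, u - v = c *: w.

Lemma qrel_refl u : qrel u u.
Proof. by exists 0; rewrite subrr scaler0. Qed.
Lemma qrel_sym u v : qrel u v -> qrel v u.
Proof. by case=> w h; exists (- w); rewrite scalerN -h opprB. Qed.
Lemma qrel_trans u v t : qrel u v -> qrel v t -> qrel u t.
Proof.
case=> w h [w' h']; exists (w + w'); rewrite scalerDr -h -h'.
by rewrite addrA subrK.
Qed.

Definition canon (u : N) : N := epsilon (inhabits (0 : N)) (fun v => qrel u v).

Lemma canon_rel u : qrel u (canon u).
Proof. apply: (epsilon_spec (inhabits (0 : N)) (fun v => qrel u v)); exists u; exact: qrel_refl. Qed.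

Lemma canon_eq u v : qrel u v -> canon u = canon v.
Proof.
move=> h; rewrite /canon; congr epsilon.
apply: functional_extensionality => t; apply: propositional_extensionality; split.
- by move=> h'; apply: qrel_trans (qrel_sym h) h'.
- by move=> h'; apply: qrel_trans h h'.
Qed.

Lemma canonK u : canon (canon u) = canon u.
Proof. by apply: canon_eq; apply: qrel_sym; apply: canon_rel. Qed.

Record quot := Quot { qval : N; qvalP : canon qval == qval }.

HB.instance Definition _ := [isSub for qval].
HB.instance Definition _ := [Choice of quot by <:].

Definition qpi (u : N) : quot := @Quot (canon u) (introT eqP (canonK u)).

Lemma qvalK q : qpi (qval q) = q.
Proof. by apply: val_inj => /=; apply/eqP; case: q. Qed.

Lemma qpi_rel u v : qpi u = qpi v <-> qrel u v.
Proof.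
split.
- move=> /(congr1 qval) /= e.
  apply: qrel_trans (canon_rel u) _; rewrite e; exact: qrel_sym (canon_rel v).
- by move=> h; apply: val_inj => /=; apply: canon_eq.
Qed.

Lemma qval_qpi u : qrel (qval (qpi u)) u.
Proof. exact: qrel_sym (canon_rel u). Qed.

Lemma qpiP q : exists u, q = qpi u.
Proof. by exists (qval q); rewrite qvalK. Qed.

Definition qzero := qpi 0.
Definition qadd p q := qpi (qval p + qval q).
Definition qopp p := qpi (- qval p).
Definition qscale k p := qpi (k *: qval p).

Lemma qaddE u v : qadd (qpi u) (qpi v) = qpi (u + v).
Proof.
apply/qpi_rel; case: (qval_qpi u) => w1 h1; case: (qval_qpi v) => w2 h2.
exists (w1 + w2); rewrite scalerDr -h1 -h2.
by rewrite opprD addrACA.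
Qed.

Lemma qoppE u : qopp (qpi u) = qpi (- u).
Proof.
apply/qpi_rel; case: (qval_qpi u) => w1 h1; exists (- w1).
by rewrite scalerN -h1 opprB addrC opprK.
Qed.

Lemma qscaleE k u : qscale k (qpi u) = qpi (k *: u).
Proof.
apply/qpi_rel; case: (qval_qpi u) => w1 h1; exists (k *: w1).
by rewrite scalerA mulrC -scalerA -h1 scalerBr.
Qed.

Lemma qaddA : associative qadd.
Proof.
move=> p q r; case: (qpiP p) => u ->; case: (qpiP q) => v ->; case: (qpiP r) => t ->.
by rewrite !qaddE addrA.
Qed.
Lemma qaddC : commutative qadd.
Proof. by move=> p q; case: (qpiP p) => u ->; case: (qpiP q) => v ->; rewrite !qaddE addrC. Qed.
Lemma qadd0 : left_id qzero qadd.
Proof. by move=> p; case: (qpiP p) => u ->; rewrite /qzero qaddE add0r. Qed.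
Lemma qaddN : left_inverse qzero qopp qadd.
Proof. by move=> p; case: (qpiP p) => u ->; rewrite qoppE qaddE addNr. Qed.

HB.instance Definition _ := GRing.isZmodule.Build quot qaddA qaddC qadd0 qaddN.

Lemma qpiD u v : qpi u + qpi v = qpi (u + v).
Proof. exact: qaddE. Qed.

Lemma qscaleA a b v : qscale a (qscale b v) = qscale (a * b) v.
Proof. by case: (qpiP v) => u ->; rewrite !qscaleE scalerA. Qed.
Lemma qscale1 : left_id 1 qscale.
Proof. by move=> v; case: (qpiP v) => u ->; rewrite qscaleE scale1r. Qed.
Lemma qscaleDr : right_distributive qscale +%R.
Proof.
move=> k p q; case: (qpiP p) => u ->; case: (qpiP q) => v ->.
by rewrite qpiD !qscaleE qpiD scalerDr.
Qed.
Lemma qscaleDl v : {morph qscale^~ v: a b / a + b}.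
Proof.
by move=> a b; case: (qpiP v) => u ->; rewrite !qscaleE qpiD scalerDl.
Qed.

HB.instance Definition _ := GRing.Zmodule_isLmodule.Build A quot qscaleA qscale1 qscaleDr qscaleDl.

Lemma qpi_linear : linear qpi.
Proof. by move=> k u v; rewrite -qpiD; congr (_ + _); rewrite -qscaleE. Qed.

HB.instance Definition _ := GRing.isLinear.Build A N quot *:%R qpi qpi_linear.

Lemma qpi_eq0 u : qpi u = 0 <-> exists w, u = c *: w.
Proof.
rewrite -(linear0 qpi) qpi_rel /qrel subr0; done.
Qed.

Lemma qpi_c u w : qpi (u + c *: w) = qpi u.
Proof. by apply/qpi_rel; exists w; rewrite addrC addKr. Qed.

Lemma qval_qpi' u : exists w, qval (qpi u) = u + c *: w.
Proof. by case: (qval_qpi u) => w h; exists w; rewrite -h addrC subrK. Qed.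

End Quot.

Definition lfun (A : comPzRingType) (U V : lmodType A) (f : U -> V) (H : linear f) : U -> V := f.
HB.instance Definition _ (A : comPzRingType) (U V : lmodType A) (f : U -> V) (H : linear f) :=
  GRing.isLinear.Build A U V *:%R (lfun H) H.

Lemma idem0 (V : zmodType) (y : V) : y = y + y -> y = 0.
Proof. by move=> e; apply: (addrI y); rewrite addr0 -e. Qed.

Section BL.
Variables (A : comPzRingType) (M N T : lmodType A) (g : M -> N -> T).
Hypothesis H : bilinear_map g.
Lemma bl0l n : g 0 n = 0. Proof. exact: (linear0 (lfun (H.1 n))). Qed.
Lemma blDl u v n : g (u + v) n = g u n + g v n. Proof. exact: (linearD (lfun (H.1 n))). Qed.
Lemma blZl k u n : g (k *: u) n = k *: g u n.
Proof. by have := H.1 n k u 0; rewrite addr0 bl0l addr0. Qed.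
Lemma bl0r m : g m 0 = 0. Proof. exact: (linear0 (lfun (H.2 m))). Qed.
Lemma blDr m u v : g m (u + v) = g m u + g m v. Proof. exact: (linearD (lfun (H.2 m))). Qed.
Lemma blZr m k u : g m (k *: u) = k *: g m u.
Proof. by have := H.2 m k u 0; rewrite addr0 bl0r addr0. Qed.
End BL.

Lemma qpiZ (A : comPzRingType) (N : lmodType A) (c k : A) (u : N) : k *: qpi c u = qpi c (k *: u).
Proof. by rewrite linearZ. Qed.

Section Flat.
Variables (A : comPzRingType) (a b : A).
Hypothesis hab : forall r : A, a * r = 0 <-> exists s, r = b * s.

Lemma ab0 : a * b = 0.
Proof. by apply/hab; exists 1; rewrite mulr1. Qed.

Lemma aqval (N : lmodType A) (t : N) : a *: qval (qpi b t) = a *: t.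
Proof. by case: (qval_qpi' b t) => w ->; rewrite scalerDr scalerA ab0 scale0r addr0. Qed.

Lemma qpi_lin (N : lmodType A) (k : A) (u v : N) :
  k *: qpi b u + qpi b v = qpi b (k *: u + v).
Proof. by rewrite linearP. Qed.

Lemma f_linear : linear (fun q : quot (A^o) b => (a *: qval q : A^o)).
Proof.
move=> k p q; case: (qpiP p) => u ->; case: (qpiP q) => v ->.
by rewrite qpi_lin !aqval scalerDr !scalerA mulrC.
Qed.

Lemma f_inj : injective (fun q : quot (A^o) b => (a *: qval q : A^o)).
Proof.
move=> p q /= e; rewrite -(qvalK p) -(qvalK q); apply/qpi_rel.
have : a * (qval p - qval q) = 0 by rewrite mulrBr; apply/eqP; rewrite subr_eq0; apply/eqP.
by case/hab => s e2; exists s; exact: e2.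
Qed.

Variable F : lmodType A.

Lemma h_linear : linear (fun q : quot F b => a *: qval q).
Proof.
move=> k p q; case: (qpiP p) => u ->; case: (qpiP q) => v ->.
by rewrite qpi_lin !aqval scalerDr !scalerA mulrC.
Qed.

Lemma tensor2 : is_tensor (fun (m : F) (r : A^o) => r *: m).
Proof.
split.
  split=> [n k u v | m k u v] /=; first by rewrite scalerDr !scalerA mulrC.
  by rewrite scalerDl scalerA.
move=> P g [g1 g2].
exists (lfun (g1 1) : {linear F -> P}); split.
  move=> m n /=; rewrite /lfun.
  have := g1 1 n m 0; rewrite addr0 => ->.
  have g00 : g 0 1 = 0.
    have := g1 1 1 0 0; rewrite !scale1r addr0; exact: idem0.
  rewrite g00 addr0.
  have := g2 m n 1 0; rewrite addr0.
  have gm0 : g m 0 = 0.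
    have := g2 m 1 0 0; rewrite !scale1r addr0; exact: idem0.
  rewrite gm0 addr0 => <-.
  by congr (g m _); rewrite /GRing.scale /= mulr1.
move=> h' hh t /=; rewrite /lfun -hh scale1r; done.
Qed.


Lemma qpi_qval_scale (t : A^o) (m : F) : qpi b (qval (qpi b t) *: m) = qpi b (t *: m).
Proof.
case: (qval_qpi' b t) => w ->; rewrite scalerDl -scalerA; exact: qpi_c.
Qed.

Lemma tensor1 : is_tensor (fun (m : F) (q : quot (A^o) b) => qpi b (qval q *: m)).
Proof.
split.
  split=> [n k u v /= | m k p q].
    by rewrite -linearP scalerDr !scalerA mulrC.
  case: (qpiP p) => u ->; case: (qpiP q) => v ->.
  rewrite (qpi_lin (N:=A^o)) !qpi_qval_scale -linearP.
  by rewrite scalerDl -scalerA.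
move=> P g gb.
set e := qpi b (1 : A^o).
have gq : forall t : F, g (qval (qpi b t)) e = g t e.
  move=> t; case: (qval_qpi' b t) => w ->; rewrite (blDl gb) (blZl gb) -(blZr gb).
  have z : qpi b (b *: (1 : A^o)) = 0 by apply/qpi_eq0; exists 1.
  by rewrite qpiZ z (bl0r gb) addr0.
have hl : linear (fun q : quot F b => g (qval q) e).
  move=> k p q; case: (qpiP p) => u ->; case: (qpiP q) => v ->.
  by rewrite qpi_lin !gq (blDl gb) (blZl gb).
exists (lfun hl : {linear quot F b -> P}); split.
  move=> m n /=; rewrite /lfun gq (blZl gb) -(blZr gb) /e qpiZ.
  by rewrite (_ : qval n *: (1 : A^o) = qval n) ?qvalK // /GRing.scale /= mulr1.
move=> h' hh t.
have et : t = qpi b (qval e *: qval t) by rewrite qpi_qval_scale scale1r qvalK.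
by rewrite [in LHS]et hh.
Qed.

Lemma flat_good : flat F -> forall m : F, a *: m = 0 -> exists n, m = b *: n.
Proof.
move=> fl m am.
have hinj : injective (lfun h_linear).
  apply: (fl (quot (A^o) b) (A^o) (lfun f_linear) f_inj (quot F b) F _ _ tensor1 tensor2).
  move=> m' n /=; rewrite /lfun aqval scalerA; done.
have : qpi b m = 0.
  apply: hinj; rewrite linear0 /= /lfun aqval; exact: am.
by case/qpi_eq0 => w ->; exists w.
Qed.

End Flat.

Section Dim.
Variables (A : comPzRingType).

Definition GoodS (a b : A) (N : lmodType A) (P : N -> Prop) :=
  (forall m, P m -> a *: m = 0 -> exists n, P n /\ m = b *: n) /\
  (forall m, P m -> b *: m = 0 -> exists n, P n /\ m = a *: n).

Lemma half (a b : A) (hba : b * a = 0) (F N : lmodType A) (p : {linear F -> N}) :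
  (forall f : F, a *: f = 0 -> exists g, f = b *: g) ->
  (forall k, p k = 0 -> b *: k = 0 -> exists k', p k' = 0 /\ k = a *: k') ->
  forall m : N, (exists f, p f = m) -> a *: m = 0 ->
    exists n, (exists f, p f = n) /\ m = b *: n.
Proof.
move=> H1 H2 m [f <-] am.
have pk : p (a *: f) = 0 by rewrite linearZ_LR am.
have bk : b *: (a *: f) = 0 by rewrite scalerA hba scale0r.
case: (H2 _ pk bk) => k [pk0 ek].
have : a *: (f - k) = 0 by rewrite scalerBr ek subrr.
case/H1 => g eg.
exists (p g); split; first by exists g.
have -> : f = k + b *: g by rewrite -eg addrC subrK.
by rewrite linearD pk0 add0r linearZ_LR.
Qed.

Lemma stepL (a b : A) (hab : a * b = 0) (hba : b * a = 0) (F N : lmodType A)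
  (p : {linear F -> N}) :
  (forall f : F, a *: f = 0 -> exists g, f = b *: g) ->
  (forall f : F, b *: f = 0 -> exists g, f = a *: g) ->
  GoodS a b (fun f => p f = 0) -> GoodS a b (fun m => exists f, p f = m).
Proof.
move=> H1 H2 [G1 G2]; split.
- exact: half.
- exact: half.
Qed.

Lemma GoodS_ext (a b : A) (N : lmodType A) (P P' : N -> Prop) :
  (forall y, P y <-> P' y) -> GoodS a b P -> GoodS a b P'.
Proof.
move=> e [G1 G2]; split=> m /e pm hm.
- by case: (G1 m pm hm) => n [/e pn ->]; exists n.
- by case: (G2 m pm hm) => n [/e pn ->]; exists n.
Qed.

Lemma res_good (a b : A) (hab : a * b = 0) (hba : b * a = 0) (M : lmodType A) (n : nat) :
  (forall F : lmodType A, flat F -> forall f : F, a *: f = 0 -> exists g, f = b *: g) ->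
  (forall F : lmodType A, flat F -> forall f : F, b *: f = 0 -> exists g, f = a *: g) ->
  flat_dim_le M n -> GoodS a b (fun _ : M => True).
Proof.
move=> ha hb [F [d [eps [fl [z [surj [ex0 ex]]]]]]].
pose Q i := GoodS a b (fun y : F i => exists w, d i w = y).
have Qn : Q n.
  have e : forall w : F n.+1, d n w = 0 by move=> w; rewrite (z _ (ltnSn n) w) linear0.
  split=> m [w <-] _; exists 0; (split; [by exists 0; rewrite linear0 | by rewrite e scaler0]).
have step : forall i, Q i.+1 -> Q i.
  move=> i Qi; apply: stepL => //; [exact: ha | exact: hb |].
  by apply: GoodS_ext Qi => y; apply: iff_sym; apply: ex.
have Q0 : Q 0%N.
  have H : forall k, (k <= n)%N -> Q (n - k)%N.
    elim=> [|k IH] hk; first by rewrite subn0.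
    apply: step; rewrite (subnSK hk); apply: IH; exact: ltnW.
  by have := H n (leqnn n); rewrite subnn.
have : GoodS a b (fun m : M => exists f, eps f = m).
  apply: stepL => //; [exact: ha | exact: hb |].
  by apply: GoodS_ext Q0 => y; apply: iff_sym; apply: ex0.
by apply: GoodS_ext => y; split => // _; apply: surj.
Qed.

End Dim.

Section Amal.
Variables (R : comPzRingType) (x : R).
Hypothesis x_regular : forall y : R, x * y = 0 -> y = 0.
Hypothesis x_nonunit : ~ (exists y : R, x * y = 1).

Lemma ea_pf : amalg_pred x (0, x).
Proof. by apply/asboolP; exists 0, 1; rewrite mulr1 add0r. Qed.
Lemma eb_pf : amalg_pred x (x, 0).
Proof. by apply/asboolP; exists x, (-1); rewrite mulrN1 subrr. Qed.

Definition ea : R ⋈ x := Amalg ea_pf.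
Definition eb : R ⋈ x := Amalg eb_pf.

Lemma pred_diag (s : R) : amalg_pred x (s, s).
Proof. by apply/asboolP; exists s, 0; rewrite mulr0 addr0. Qed.

Lemma pm (u1 u2 v1 v2 : R) : ((u1, u2) * (v1, v2) : R * R) = (u1 * v1, u2 * v2).
Proof. by []. Qed.

Lemma amalg_eq (p q : R ⋈ x) : amalg_val p = amalg_val q -> p = q.
Proof. exact: val_inj. Qed.

Lemma eab0 : ea * eb = 0.
Proof. by apply: amalg_eq => /=; rewrite pm mulr0 mul0r. Qed.
Lemma eba0 : eb * ea = 0.
Proof. by apply: amalg_eq => /=; rewrite pm mulr0 mul0r. Qed.

Lemma ann_a (r : R ⋈ x) : ea * r = 0 <-> exists s, r = eb * s.
Proof.
split; last by case=> s ->; rewrite mulrA eab0 mul0r.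
case: r => [[r1 r2] P] e; case/asboolP: (P) => u [s [e1 e2]].
have := congr1 (@amalg_val R x) e => /=; rewrite pm => /(congr1 snd) /= /x_regular r20.
exists (Amalg (pred_diag (- s))); apply: amalg_eq => /=.
rewrite pm mul0r mulrN r20 e1; congr pair; apply/eqP; rewrite -addr_eq0 -e2 r20 //.
Qed.

Lemma ann_b (r : R ⋈ x) : eb * r = 0 <-> exists s, r = ea * s.
Proof.
split; last by case=> s ->; rewrite mulrA eba0 mul0r.
case: r => [[r1 r2] P] e; case/asboolP: (P) => u [s [e1 e2]].
have := congr1 (@amalg_val R x) e => /=; rewrite pm => /(congr1 fst) /= /x_regular r10.
exists (Amalg (pred_diag s)); apply: amalg_eq => /=.
by rewrite pm mul0r e2 -e1 r10 add0r.
Qed.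

End Amal.

End Aux.
Import Aux.
Import GRing.Theory.
Theorem mainTheorem7 (R : comPzRingType) (x : R)
  (x_regular : forall y : R, x * y = 0 -> y = 0)
  (x_nonunit : ~ (exists y : R, x * y = 1)) :
  wdim_infinite (R ⋈ x).
Proof.
move=> n; exists (quot ((R ⋈ x)^o) (ea x)) => H.
have G := res_good (eab0 x) (eba0 x) _ _ H.
case: G.
- by move=> F fl; apply: (flat_good (ann_a x_regular) fl).
- by move=> F fl; apply: (flat_good (ann_b x_regular) fl).
move=> G1 _.
have := G1 (qpi (ea x) (1 : (R ⋈ x)^o)) I.
case.
  by rewrite qpiZ; apply/qpi_eq0; exists 1.
move=> m [_ e]; move: e; rewrite -(qvalK m) qpiZ => /qpi_rel [w e].
have := congr1 (fun p : R ⋈ x => (amalg_val p).1) e => /=.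
rewrite mul0r => /eqP; rewrite subr_eq0 => /eqP e1.
by apply: x_nonunit; exists (amalg_val (qval m)).1.
Qed.
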